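(* Let $G$ be a connected nonbipartite graph with vertex set $\{u_1,\dots,u_m\}$ and $\kappa(G)=\delta(G)>0$, and let $n\ge 3$. Let $S\subseteq V(G\times K_n)$ satisfy: (1) $|S|=(n-1)\delta(G)$; (2) $S_i':=S_i\setminus S\neq\varnothing$ for every $i=1,\dots,m$; (3) $G\times K_n-S$ has no isolated vertex. Then for every $i\in\{1,\dots,m\}$, the set $S_i'$ is contained in the vertex set of a single connected component of $G\times K_n-S$.
   Context: The Kronecker product $G_1\times G_2$ has vertex set $V(G_1)\times V(G_2)$, with $(u_1,v_1)(u_2,v_2)$ an edge iff $u_1u_2\in E(G_1)$ and $v_1v_2\in E(G_2)$. Write $V(K_n)=\{v_1,\dots,v_n\}$ and $S_i=\{u_i\}\times V(K_n)$ for $i=1,\dots,m$. *)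

(* Defs.v *)
From mathcomp Require Import all_boot all_order.
Set Implicit Arguments. Unset Strict Implicit. Unset Printing Implicit Defensive.

Section Graphs.
Variable V : finType.

Definition simple_graph (e : rel V) : Prop := symmetric e /\ irreflexive e.

(* the subgraph induced on the complement of X: adjacency restricted to vertices outside X *)
Definition del_rel (e : rel V) (X : {set V}) : rel V :=
  fun x y => [&& x \notin X, y \notin X & e x y].

Definition connected_graph (e : rel V) : Prop := forall x y : V, connect e x y.

Definition bipartite (e : rel V) : Prop :=
  exists f : V -> bool, forall x y, e x y -> f x != f y.

Definition degree (e : rel V) (v : V) : nat := #|[set w | e v w]|.

(* minimum degree delta(G) (0 for the empty graph) *)
Definition min_degree (e : rel V) : nat := \big[minn/#|V|]_(v : V) degree e v.

Definition disconnects (e : rel V) (X : {set V}) : bool :=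
  [exists a, exists b, [&& a \notin X, b \notin X & ~~ connect (del_rel e X) a b]].

Definition vertex_connectivity (e : rel V) : nat :=
  \big[minn/#|V|]_(X : {set V} | disconnects e X || (#|~: X| <= 1)) #|X|.
End Graphs.

Definition Kn_rel (n : nat) : rel 'I_n := fun i j => i != j.

Definition kron_Kn (V : finType) (e : rel V) (n : nat) : rel (V * 'I_n) :=
  fun x y => e x.1 y.1 && Kn_rel x.2 y.2.

Definition fiber (V : finType) (n : nat) (u : V) : {set V * 'I_n} :=
  [set x | x.1 == u].
Arguments fiber {V} n u.
Arguments kron_Kn {V} e n.

(* Main.v *)
Require Import Defs.
From mathcomp Require Import all_boot all_order.
From Stdlib Require Import Lia.

Lemma ar_aux (N Y qa qb d k : nat) : d <= N -> 0 < Y -> 1 <= k ->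
  (N + Y) * k + qa + qb <= k.+1 * d -> Y + qa + qb <= d.
Proof. move=> /leP h1 /leP h2 /leP h3 /leP h4; apply/leP.
rewrite -?plusE -?multE in h1 h2 h3 h4 *. nia. Qed.

Lemma ar2 (nh zp zip z p pa pb pab d : nat) : zp + zip = z + p -> p + pab = pa + pb ->
  nh <= zp -> d <= nh -> z + pa + pb <= d -> [/\ zip = 0, pab = 0 & zp <= nh].
Proof. move=> h1 h2 /leP h3 /leP h4 /leP h5.
rewrite -?plusE in h1 h2 h5. have H1 : zip = 0 by lia. have H2 : pab = 0 by lia.
split => //; apply/leP; lia. Qed.

Lemma bigmin_leq (I : finType) (P : pred I) (F : I -> nat) x j :
  P j -> \big[minn/x]_(i | P i) F i <= F j.
Proof.
move=> Pj; rewrite -big_filter.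
have : j \in [seq i <- index_enum I | P i] by rewrite mem_filter Pj mem_index_enum.
elim: (filter _ _) => [|k s IH] //; rewrite big_cons inE => /orP[/eqP<-|/IH H].
  exact: geq_minl.
exact: leq_trans (geq_minr _ _) H.
Qed.

Lemma kappa_conn (V : finType) (e : rel V) (X : {set V}) :
  #|X| < vertex_connectivity e ->
  forall a b, a \notin X -> b \notin X -> connect (del_rel e X) a b.
Proof.
move=> H a b Ha Hb; apply/negPn/negP => Hn.
have D : disconnects e X.
  by apply/existsP; exists a; apply/existsP; exists b; rewrite Ha Hb Hn.
have := @bigmin_leq _ (fun X : {set V} => disconnects e X || (#|~: X| <= 1))
   (fun X => #|X|) #|V| X.
rewrite D => /(_ isT) H'.
by move: H; rewrite /vertex_connectivity ltnNge H'.
Qed.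

Lemma cardsU_disj (T : finType) (A B : {set T}) :
  A :&: B = set0 -> #|A :|: B| = #|A| + #|B|.
Proof. by move=> H; rewrite -cardsUI H cards0 addn0. Qed.

Theorem lemma2p4 (V : finType) (e : rel V) (n : nat) (S : {set V * 'I_n}) :
  simple_graph e ->
  connected_graph e ->
  ~ bipartite e ->
  vertex_connectivity e = min_degree e ->
  0 < min_degree e ->
  3 <= n ->
  #|S| = (n - 1) * min_degree e ->
  (forall u : V, fiber n u :\: S != set0) ->
  (forall x, x \notin S -> exists y, (y \notin S) && kron_Kn e n x y) ->
  forall u : V, forall x y, x \in fiber n u :\: S -> y \in fiber n u :\: S ->
    connect (del_rel (kron_Kn e n) S) x y.
Proof.
move=> [esym eirr] conn nbip kd dpos n3 cardS fibne noiso u [xu a] [yu b].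
rewrite !inE /= => /andP[xnS /eqP Exu] /andP[ynS /eqP Eyu]; subst xu yu.
set F := del_rel (kron_Kn e n) S.
set d := min_degree e.
have degd : forall v, d <= degree e v.
  by move=> v; rewrite /d /min_degree; apply: (@bigmin_leq _ predT).
have Fsym : symmetric F.
  by move=> p q; rewrite /F /del_rel /kron_Kn /Kn_rel esym eq_sym andbCA.
have Fmk : forall v c w d, (v,c) \notin S -> (w,d) \notin S -> e v w -> c != d ->
    F (v,c) (w,d).
  by move=> v c w d' H1 H2 H3 H4; rewrite /F /del_rel /kron_Kn /Kn_rel /= H1 H2 H3 H4.
have [ab0|ab] := eqVneq a b; first by rewrite ab0 connect0.
apply/negPn/negP => nc.
pose Tc p := connect F (u, a) p.
have Tx : Tc (u, a) by exact: connect0.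
have Ty : Tc (u, b) = false.
  exact: negbTE nc.
have trans : forall p q, F p q -> Tc p = Tc q.
  move=> p q Fpq; apply/idP/idP => H; first exact: connect_trans H (connect1 Fpq).
  by apply: connect_trans H (connect1 _); rewrite Fsym.
have edge : forall v c w d, (v,c) \notin S -> (w,d) \notin S -> e v w -> c != d ->
    Tc (v,c) = Tc (w,d).
  by move=> v c w d' H1 H2 H3 H4; apply: trans; apply: Fmk.
have st1 : forall w c, e u w -> c != a -> c != b -> (w,c) \in S.
  move=> w c euw ca cb; apply/negPn/negP => wS.
  move: Ty; rewrite -(edge w c u b wS ynS _ cb); last by rewrite esym.
  have ac : a != c by rewrite eq_sym.
  by rewrite -(edge u a w c xnS wS euw ac) Tx.
have [w0 [uw0 w0b]] : exists w, e u w /\ (w,b) \notin S.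
  have [[w d'] /andP[wdS]] := noiso _ xnS.
  rewrite /kron_Kn /Kn_rel /= => /andP[euw ad]; exists w; split => //.
  case: (eqVneq d' b) => [<-//|db].
  by move: wdS; rewrite st1 // eq_sym.
have [w1 [uw1 w1a]] : exists w, e u w /\ (w,a) \notin S.
  have [[w d'] /andP[wdS]] := noiso _ ynS.
  rewrite /kron_Kn /Kn_rel /= => /andP[euw ad]; exists w; split => //.
  case: (eqVneq d' a) => [<-//|da].
  by move: wdS; rewrite st1 // eq_sym.
have st3 : forall c, c != a -> c != b -> (u,c) \in S.
  move=> c ca cb; apply/negPn/negP => ucS.
  move: Ty; rewrite -(edge w1 a u b w1a ynS _ ab); last by rewrite esym.
  rewrite -(edge u c w1 a ucS w1a uw1 ca).
  rewrite (edge u c w0 b ucS w0b uw0 cb).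
  by rewrite -(edge u a w0 b xnS w0b uw0 ab) Tx.
pose Pa := [set v | (v,a) \in S].
pose Pb := [set v | (v,b) \in S].
pose P := Pa :|: Pb.
have freeA : forall v, v \notin P -> (v,a) \notin S.
  by move=> v; rewrite !inE negb_or => /andP[].
have freeB : forall v, v \notin P -> (v,b) \notin S.
  by move=> v; rewrite !inE negb_or => /andP[].
have uP : u \notin P by rewrite !inE negb_or xnS ynS.
pose Nu := [set w | e u w].
pose C := [set c : 'I_n | (c != a) && (c != b)].
have cardC : #|C| = n - 2.
  have -> : C = ~: [set a; b] by apply/setP => c; rewrite !inE negb_or.
  by rewrite cardsCs setCK cards2 ab card_ord.
have count : forall Y : {set V}, (forall z, z \in Y -> ~~ e u z) ->
    (forall z c, z \in Y -> c \in C -> (z,c) \in S) ->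
    (#|Nu| + #|Y|) * (n - 2) + #|Pa| + #|Pb| <= #|S|.
  move=> Y YN YS.
  pose A1 := setX (Nu :|: Y) C.
  pose A2 := setX Pa [set a].
  pose A3 := setX Pb [set b].
  have h1 : #|A1| = (#|Nu| + #|Y|) * (n - 2).
    rewrite cardsX cardC cardsU_disj //; apply/setP => z; rewrite !inE.
    by apply/negP => /andP[H /YN]; rewrite H.
  have h2 : #|A2| = #|Pa| by rewrite cardsX cards1 muln1.
  have h3 : #|A3| = #|Pb| by rewrite cardsX cards1 muln1.
  have d12 : A1 :&: A2 = set0.
    apply/setP => [[v c]]; rewrite !inE /=.
    by apply/negP => /and3P[/andP[_ /andP[/negPf ->]]].
  have d123 : (A1 :|: A2) :&: A3 = set0.
    apply/setP => [[v c]]; rewrite !inE /=.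
    apply/negP => /andP[/orP[/andP[_ /andP[_ /negPf ->]]|/andP[_ /eqP->]]]
      /andP[_ /eqP H] //.
    by move: ab; rewrite H eqxx.
  rewrite -h1 -h2 -h3 -cardsU_disj // -cardsU_disj //.
  apply: subset_leq_card; apply/subsetP => [[v c]]; rewrite !inE /=.
  case/orP => [/orP[]|].
  - move=> /andP[/orP[H|H] /andP[ca cb]]; first exact: st1.
    by apply: YS => //; rewrite inE ca cb.
  - by move=> /andP[H /eqP->].
  - by move=> /andP[H /eqP->].
have n2 : 1 <= n - 2 by rewrite leq_subRL // ltnW.
have n1 : n - 1 = (n - 2).+1 by rewrite -subSn // ltnW.
have arith : forall Y : {set V}, (forall z, z \in Y -> ~~ e u z) ->
    (forall z c, z \in Y -> c \in C -> (z,c) \in S) -> 0 < #|Y| ->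
    #|Y| + #|Pa| + #|Pb| <= d.
  move=> Y YN YS Y0; apply: (@ar_aux #|Nu| _ _ _ _ (n - 2)) => //.
    exact: degd.
  by rewrite -n1 -cardS; apply: count.
have Pbound : #|P| < d.
  have H : #|P| <= #|Pa| + #|Pb| by rewrite -cardsUI leq_addr.
  have Hu : 1 + #|Pa| + #|Pb| <= d.
    rewrite -(cards1 u); apply: arith; last by rewrite cards1.
      by move=> z; rewrite inE => /eqP->; rewrite eirr.
    by move=> z c; rewrite !inE => /eqP-> /andP[]; apply: st3.
  rewrite -addnA add1n in Hu.
  exact: leq_ltn_trans H Hu.
have Conn : forall v, v \notin P -> connect (del_rel e P) u v.
  by move=> v vP; apply: kappa_conn => //; rewrite kd.
have gen : forall p s, s \notin P -> Tc (s,a) != Tc (s,b) ->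
    path (del_rel e P) s p -> Tc (last s p, a) != Tc (last s p, b).
  elim => [|v' p IH] s sP Hs //= /andP[/and3P[_ vP' esv] pth].
  have ba : b != a by rewrite eq_sym.
  apply: (IH v' vP') pth.
  rewrite -(edge s b v' a (freeB s sP) (freeA v' vP') esv ba).
  by rewrite -(edge s a v' b (freeA s sP) (freeB v' vP') esv ab) eq_sym.
have ex1 : forall v, v \notin P -> Tc (v,a) != Tc (v,b).
  move=> v vP; case/connectP: (Conn v vP) => p pth ->.
  by apply: gen => //; rewrite Tx Ty.
pose Z := [set z | ~~ e u z && ((z == u) || [exists h, (h \notin P) && e z h])].
have Zsub : forall z c, z \in Z -> c \in C -> (z,c) \in S.
  move=> z c; rewrite !inE => /andP[nuz /orP[/eqP->|/existsP[h /andP[hP ezh]]]]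
    /andP[ca cb]; first exact: st3.
  apply/negPn/negP => zcS; have := ex1 h hP.
  rewrite -(edge z c h a zcS (freeA h hP) ezh ca).
  by rewrite -(edge z c h b zcS (freeB h hP) ezh cb) eqxx.
have ZN : forall z, z \in Z -> ~~ e u z by move=> z; rewrite inE => /andP[].
have uZ : u \in Z by rewrite inE eirr eqxx.
have Zb : #|Z| + #|Pa| + #|Pb| <= d.
  by apply: arith => //; apply/card_gt0P; exists u.
have /subsetPn [h hNu hP] : ~~ (Nu \subset P).
  apply/negP => /subset_leq_card H.
  have := degd u; rewrite /degree -/Nu => H2.
  by move: (leq_trans H2 H); rewrite leqNgt Pbound.
have ehu : e u h by move: hNu; rewrite inE.
have Thb : Tc (h,b) by rewrite -(edge u a h b xnS (freeB h hP) ehu ab).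
have Tha : Tc (h,a) = false.
  by move: (ex1 h hP); rewrite Thb; case: (Tc (h,a)).
pose Nh := [set v | e h v].
have NhS : Nh \subset Z :|: P.
  apply/subsetP => v; rewrite inE => ehv.
  rewrite inE; case vP: (v \in P); first by rewrite orbT.
  rewrite orbF inE; apply/andP; split.
    apply/negP => euv.
    have T1 := edge u a v b xnS (freeB v (negbT vP)) euv ab.
    have ba : b != a by rewrite eq_sym.
    have T2 := edge v b h a (freeB v (negbT vP)) (freeA h hP) _ ba.
    by move: T1; rewrite Tx T2 ?Tha // esym.
  by apply/orP; right; apply/existsP; exists h; rewrite hP esym ehv.
have c1 := cardsUI Z P.
have c2 := cardsUI Pa Pb.
have c3 := subset_leq_card NhS.
have c4 : d <= #|Nh| by exact: degd.
have [ZP0 PP0 NhZ] := @ar2 _ _ _ _ _ _ _ _ _ c1 c2 c3 c4 Zb.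
have NhE : Nh = Z :|: P by apply/eqP; rewrite eqEcard NhS NhZ.
case: (set_0Vmem P) => [P0 | [z0 z0P]].
  apply: nbip; exists (fun v => Tc (v,a)) => v w evw.
  have vP : v \notin P by rewrite P0 inE.
  have wP : w \notin P by rewrite P0 inE.
  rewrite (edge v a w b (freeA v vP) (freeB w wP) evw ab) eq_sym.
  exact: ex1.
have z0Nh : z0 \in Nh by rewrite NhE inE z0P orbT.
have ehz : e h z0 by move: z0Nh; rewrite inE.
have z0Z : z0 \notin Z.
  apply/negP => H; move/eqP: ZP0; rewrite cards_eq0 => /eqP/setP/(_ z0).
  by rewrite in_setI H z0P in_set0.
have euz : e u z0.
  apply/negPn/negP => nuz; move/negP: z0Z; apply.
  by rewrite inE nuz /=; apply/orP; right; apply/existsP; exists h; rewrite hP esym.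
have ezu : e z0 u by rewrite esym.
have ezh : e z0 h by rewrite esym.
move: z0P; rewrite inE => /orP[] zin.
- have zb : (z0,b) \notin S.
    apply/negP => zb; move/eqP: PP0; rewrite cards_eq0 => /eqP/setP/(_ z0).
    by rewrite in_setI zin in_set0 inE zb.
  have ba : b != a by rewrite eq_sym.
  have T1 := edge z0 b u a zb xnS ezu ba.
  have T2 := edge z0 b h a zb (freeA h hP) ezh ba.
  by move: T2; rewrite T1 Tx Tha.
- have za : (z0,a) \notin S.
    apply/negP => za; move/eqP: PP0; rewrite cards_eq0 => /eqP/setP/(_ z0).
    by rewrite in_setI zin in_set0 inE za.
  have T1 := edge z0 a u b za ynS ezu ab.
  have T2 := edge z0 a h b za (freeB h hP) ezh ab.
  by move: T2; rewrite T1 Ty Thb.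
Qed.
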